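(* Let $X$ be a real Hilbert space, let $D$ be a nonempty subset of $X$, let $T\colon D\to X$, let $\alpha\in\,]0,+\infty[$, set $A=T^{-1}-\mathrm{Id}$ (so $T=J_A$) and $\rho=\tfrac{1}{2\alpha}-1>-1$. Then: (i) $T$ is $\alpha$-conically nonexpansive $\iff$ $A$ is $\rho$-comonotone. (ii) [$T$ is $\alpha$-conically nonexpansive and $D=X$] $\iff$ $A$ is maximally $\rho$-comonotone. (iii) $T$ is nonexpansive $\iff$ $A$ is $(-\tfrac12)$-comonotone. (iv) [$T$ is nonexpansive and $D=X$] $\iff$ $A$ is maximally $(-\tfrac12)$-comonotone. If moreover $\alpha\in\,]0,1[$, equivalently $\rho>-\tfrac12$, then also: (v) $T$ is $\alpha$-averaged $\iff$ $A$ is $\rho$-comonotone. (vi) [$T$ is $\alpha$-averaged and $D=X$] $\iff$ $A$ is maximally $\rho$-comonotone.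
   Context: For $T\colon D\to X$, $T^{-1}$ is the set-valued inverse and $J_A=(\mathrm{Id}+A)^{-1}$. A map $N\colon D\to X$ is nonexpansive if $\|Nx-Ny\|\le\|x-y\|$ for all $x,y\in D$. For $\alpha>0$, $T$ is $\alpha$-conically nonexpansive if $T=(1-\alpha)\mathrm{Id}+\alpha N$ for some nonexpansive $N\colon D\to X$; for $\alpha\in]0,1[$, $\alpha$-averaged means the same. For $\rho\in\mathbb R$, $A\colon X\rightrightarrows X$ is $\rho$-comonotone if $\langle x-y,u-v\rangle\ge\rho\|u-v\|^2$ for all $(x,u),(y,v)\in\operatorname{gra}A$; maximally $\rho$-comonotone if moreover no $\rho$-comonotone operator has a graph properly containing $\operatorname{gra}A$. *)

(* Defs.v *)
From HB Require Import structures.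
From mathcomp Require Import all_boot all_order all_algebra.
From mathcomp Require Import all_classical all_reals.
Set Implicit Arguments. Unset Strict Implicit. Unset Printing Implicit Defensive.
Import Order.TTheory GRing.Theory Num.Theory.
Local Open Scope classical_set_scope.
Local Open Scope ring_scope.

Section Hilbert.
Variables (R : realType) (V : lmodType R).

Definition ipnorm (ip : V -> V -> R) (x : V) : R := Num.sqrt (ip x x).

Record is_hilbert (ip : V -> V -> R) : Prop := IsHilbert {
  ip_sym : forall x y, ip x y = ip y x;
  ip_linl : forall (a : R) x y z, ip (a *: x + y) z = a * ip x z + ip y z;
  ip_ge0 : forall x, 0 <= ip x x;
  ip_eq0 : forall x, ip x x = 0 -> x = 0;
  ip_complete : forall s : nat -> V,
    (forall e : R, 0 < e -> exists N : nat, forall m n : nat,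
        (N <= m)%N -> (N <= n)%N -> ipnorm ip (s m - s n) < e) ->
    exists l : V, forall e : R, 0 < e -> exists N : nat, forall n : nat,
        (N <= n)%N -> ipnorm ip (s n - l) < e
}.

(* set-valued operators X ⇉ X are represented as V -> set V *)
Definition setinv (D : set V) (T : V -> V) : V -> set V :=
  fun x => [set y | D y /\ T y = x].

Definition sub_id (B : V -> set V) : V -> set V :=
  fun x => [set y - x | y in B x].

Definition nonexpansive (ip : V -> V -> R) (D : set V) (N : V -> V) : Prop :=
  forall x y, D x -> D y -> ipnorm ip (N x - N y) <= ipnorm ip (x - y).

Definition conically_nonexpansive (ip : V -> V -> R) (D : set V)
    (alpha : R) (T : V -> V) : Prop :=
  0 < alpha /\ exists N : V -> V, nonexpansive ip D N /\
    forall x, D x -> T x = (1 - alpha) *: x + alpha *: N x.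

Definition averaged (ip : V -> V -> R) (D : set V) (alpha : R) (T : V -> V)
  : Prop := 0 < alpha < 1 /\ conically_nonexpansive ip D alpha T.

Definition comonotone (ip : V -> V -> R) (rho : R) (A : V -> set V) : Prop :=
  forall x u y v, A x u -> A y v ->
    rho * (ipnorm ip (u - v)) ^+ 2 <= ip (x - y) (u - v).

Definition max_comonotone (ip : V -> V -> R) (rho : R) (A : V -> set V)
  : Prop :=
  comonotone ip rho A /\
  forall B : V -> set V, comonotone ip rho B ->
    (forall x, A x `<=` B x) -> forall x, B x `<=` A x.

End Hilbert.

(* Main.v *)
Require Import Defs.
From HB Require Import structures.
From mathcomp Require Import all_boot all_order all_algebra.
From mathcomp Require Import all_classical all_reals.
From mathcomp Require Import ring lra.
Set Implicit Arguments. Unset Strict Implicit. Unset Printing Implicit Defensive.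
Import Order.TTheory GRing.Theory Num.Theory.
Local Open Scope classical_set_scope.
Local Open Scope ring_scope.


Section Reals.
Context {R : realType}.

Definition eps (n : nat) : R := (n.+1%:R)^-1.

Lemma eps_gt0 n : 0 < eps n.
Proof. by rewrite /eps invr_gt0 ltr0Sn. Qed.

Lemma eps_le n m : (n <= m)%N -> eps m <= eps n.
Proof.
move=> nm; rewrite /eps lef_pV2 ?posrE ?ltr0Sn // ler_nat ltnS //.
Qed.

Lemma eps_le1 n : eps n <= 1.
Proof. by have := eps_le (leq0n n); rewrite /eps invr1. Qed.

Lemma R1 (x a : R) : (forall e, 0 < e -> x <= a + e) -> x <= a.
Proof. by move=> h; apply/ler_addgt0Pr. Qed.

Lemma small_eps (b e : R) : 0 < e -> exists n, b * eps n <= e.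
Proof.
move=> e0; exists (Num.truncn (b / e)).
have h := truncnS_gt (b / e).
have hp : 0 < (Num.truncn (b / e)).+1%:R :> R by rewrite ltr0Sn.
rewrite /eps ler_pdivrMr // mulrC; apply: ltW; rewrite -ltr_pdivrMr //.
Qed.

Lemma R2 (x a b : R) : (forall n, x <= a + b * eps n) -> x <= a.
Proof.
move=> h; apply: R1 => e e0; have [n hn] := small_eps b e0.
by apply: (le_trans (h n)); rewrite lerD2l.
Qed.

Lemma R3 (x a b : R) : (forall t, 0 < t -> x <= a + t * b) -> x <= a.
Proof.
move=> h; apply: R1 => e e0.
have hb : 0 < `|b| + 1 by rewrite ltr_pwDr ?normr_ge0.
have t0 : 0 < e / (`|b| + 1) by rewrite divr_gt0.
apply: (le_trans (h _ t0)); rewrite lerD2l.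
apply: (le_trans (_ : _ <= e / (`|b| + 1) * (`|b| + 1))).
  rewrite ler_pM2l // (le_trans (ler_norm b)) // lerDl ler01 //.
by rewrite mulfVK ?gt_eqF.
Qed.

End Reals.

Section Basics.
Variables (R : realType) (V : lmodType R) (ip : V -> V -> R).
Hypothesis Hip : is_hilbert ip.

Local Notation n2 x := (ip x x).

Lemma ipDl x y z : ip (x + y) z = ip x z + ip y z.
Proof. by have := ip_linl Hip 1 x y z; rewrite scale1r mul1r. Qed.

Lemma ip0l z : ip 0 z = 0.
Proof. have := ipDl 0 0 z; rewrite addr0; lra. Qed.

Lemma ipZl a x z : ip (a *: x) z = a * ip x z.
Proof. by have := ip_linl Hip a x 0 z; rewrite addr0 ip0l addr0. Qed.

Lemma ipNl x z : ip (- x) z = - ip x z.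
Proof. by rewrite -scaleN1r ipZl mulN1r. Qed.

Lemma ipBl x y z : ip (x - y) z = ip x z - ip y z.
Proof. by rewrite ipDl ipNl. Qed.

Lemma ipDr x y z : ip z (x + y) = ip z x + ip z y.
Proof. by rewrite ip_sym // ipDl // !(ip_sym Hip z). Qed.

Lemma ipZr a x z : ip z (a *: x) = a * ip z x.
Proof. by rewrite ip_sym // ipZl // (ip_sym Hip z). Qed.

Lemma ipNr x z : ip z (- x) = - ip z x.
Proof. by rewrite ip_sym // ipNl // (ip_sym Hip z). Qed.

Lemma ipBr x y z : ip z (x - y) = ip z x - ip z y.
Proof. by rewrite ipDr ipNr. Qed.

Lemma ip0r z : ip z 0 = 0.
Proof. by rewrite ip_sym // ip0l. Qed.

Definition ipE := (ipDl, ipDr, ipZl, ipZr, ipNl, ipNr, ip0l, ip0r).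

Lemma n2_ge0 x : 0 <= n2 x. Proof. exact: ip_ge0. Qed.

Lemma n2N x : n2 (- x) = n2 x.
Proof. by rewrite ipNl ipNr opprK. Qed.

Lemma n2_sym x y : n2 (x - y) = n2 (y - x).
Proof. by rewrite -n2N opprB. Qed.

Lemma n2D x y : n2 (x + y) = n2 x + 2 * ip x y + n2 y.
Proof. rewrite !ipE (ip_sym Hip y x); ring. Qed.

Lemma n2B x y : n2 (x - y) = n2 x - 2 * ip x y + n2 y.
Proof. by rewrite n2D ipNr n2N; ring. Qed.

Lemma ip_young u v (t : R) : 0 < t -> 2 * ip u v <= t * n2 u + t^-1 * n2 v.
Proof.
move=> t0; have := n2_ge0 (t *: u - v); rewrite n2B !ipE => h.
have : 2 * t * ip u v <= t * t * n2 u + n2 v by lra.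
move=> h2; rewrite -(ler_pM2l t0).
have -> : t * (t * n2 u + t^-1 * n2 v) = t * t * n2 u + n2 v.
  by field; rewrite gt_eqF.
lra.
Qed.

Lemma n2_tri a b c t : 0 < t ->
  n2 (a - c) <= (1 + t) * n2 (a - b) + (1 + t^-1) * n2 (b - c).
Proof.
move=> t0; have -> : a - c = (a - b) + (b - c) by rewrite addrA subrK.
rewrite n2D; have := ip_young (a - b) (b - c) t0; lra.
Qed.

Lemma n2_tri2 a b c : n2 (a - c) <= 2 * n2 (a - b) + 2 * n2 (b - c).
Proof. by have := n2_tri a b c ltr01; rewrite invr1. Qed.

Lemma n2_eq0 x : n2 x = 0 -> x = 0. Proof. exact: ip_eq0. Qed.

Lemma ipnormE x : ipnorm ip x ^+ 2 = n2 x.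
Proof. by rewrite /ipnorm sqr_sqrtr // n2_ge0. Qed.

Lemma ipnorm_le x y : (ipnorm ip x <= ipnorm ip y) = (n2 x <= n2 y).
Proof. by rewrite /ipnorm ler_sqrt // n2_ge0. Qed.


Lemma complete_rate (w : nat -> V) (c : R) : 0 <= c ->
  (forall n k, (n <= k)%N -> n2 (w n - w k) <= c * eps n) ->
  exists p, forall n, n2 (w n - p) <= c * eps n.
Proof.
move=> c0 hw.
have cau : forall e : R, 0 < e -> exists N : nat, forall m n : nat,
    (N <= m)%N -> (N <= n)%N -> ipnorm ip (w m - w n) < e.
  move=> e e0; have e20 : 0 < e ^+ 2 / 2 by rewrite divr_gt0 ?exprn_gt0.
  have [N hN] := small_eps c e20; exists N => m n hm hn.
  have key : n2 (w m - w n) < e ^+ 2.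
    suff : n2 (w m - w n) <= e ^+ 2 / 2.
      move=> h; apply: (le_lt_trans h); rewrite ltr_pdivrMr // ltr_pMr ?exprn_gt0 //.
      by rewrite ltr1n.
    apply: (le_trans _ hN); case: (leqP m n) => mn.
      apply: (le_trans (hw _ _ mn)); rewrite ler_wpM2l // eps_le //.
    rewrite n2_sym; apply: (le_trans (hw _ _ (ltnW mn))); rewrite ler_wpM2l // eps_le //.
  rewrite /ipnorm -[e]ger0_norm ?ltW // -sqrtr_sqr ltr_sqrt ?exprn_gt0 //.
have [l hl] := ip_complete Hip cau; exists l => n.
apply: (@R3 _ _ _ (c * eps n)) => t t0.
apply: (@R2 _ _ _ (1 + t^-1)) => m.
have sm : 0 < Num.sqrt (eps m : R).
  by rewrite sqrtr_gt0 eps_gt0.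
have [N hN] := hl _ sm; have := hN (maxn N n) (leq_maxl N n).
rewrite /ipnorm ltr_sqrt ?eps_gt0 // => h3.
have h1 := hw n (maxn N n) (leq_maxr N n).
have h4 := n2_tri (w n) (w (maxn N n)) l t0.
have ti : 0 <= 1 + t^-1 by rewrite addr_ge0 // invr_ge0 ltW.
have t1 : 0 <= 1 + t by lra.
have h5 := ler_wpM2l t1 h1.
have h6 := ler_wpM2l ti (ltW h3).
lra.
Qed.


Section Finite.
Variable k : nat.
Implicit Types a : 'I_k -> R.

Definition bar a (v : 'I_k -> V) := \sum_i a i *: v i.

Lemma ip_sumZr u a (v : 'I_k -> V) : ip u (\sum_i a i *: v i) = \sum_i a i * ip u (v i).
Proof.
rewrite (big_morph (ip u) (fun x y => ipDr x y u) (ip0r u)).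
by apply: eq_bigr => i _; exact: ipZr.
Qed.

Lemma sum_delta (F : 'I_k -> R) j : \sum_i (i == j)%:R * F i = F j.
Proof.
rewrite (bigD1 j) //= eqxx mul1r big1 ?addr0 // => i /negbTE ->.
by rewrite mul0r.
Qed.

Lemma sum_delta1 (j : 'I_k) : \sum_i ((i == j)%:R : R) = 1.
Proof. by rewrite (bigD1 j) //= eqxx big1 ?addr0 // => i /negbTE ->. Qed.

Lemma sum_deltaZ (F : 'I_k -> V) (j : 'I_k) : \sum_i ((i == j)%:R : R) *: F i = F j.
Proof.
rewrite (bigD1 j) //= eqxx scale1r big1 ?addr0 // => i /negbTE ->.
by rewrite scale0r.
Qed.

Lemma sum_ge_term (F : 'I_k -> R) j : (forall i, 0 <= F i) -> F j <= \sum_i F i.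
Proof. by move=> h; rewrite (bigD1 j) //= lerDl sumr_ge0. Qed.

Lemma I1 a (v : 'I_k -> V) x : \sum_i a i = 1 ->
  \sum_i a i * n2 (x - v i) = \sum_i a i * n2 (bar a v - v i) + n2 (x - bar a v).
Proof.
move=> Ha.
have e1 : \sum_i a i *: (bar a v - v i) = 0.
  rewrite (eq_bigr (fun i => a i *: bar a v - a i *: v i)); last first.
    by move=> i _; rewrite scalerBr.
  by rewrite sumrB -scaler_suml Ha scale1r subrr.
rewrite (eq_bigr (fun i => a i * n2 (x - bar a v) + 2 * (a i * ip (x - bar a v) (bar a v - v i))
   + a i * n2 (bar a v - v i))); last first.
  move=> i _; have -> : x - v i = (x - bar a v) + (bar a v - v i) by rewrite addrA subrK.
  by rewrite n2D; ring.
rewrite !big_split /= -big_distrl /= Ha mul1r -big_distrr /= -ip_sumZr e1 ip0r.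
ring.
Qed.

Lemma DS a (v : 'I_k -> V) : \sum_i a i = 1 ->
  \sum_j a j * (\sum_i a i * n2 (v j - v i)) = 2 * \sum_i a i * n2 (bar a v - v i).
Proof.
move=> Ha.
rewrite (eq_bigr (fun j => a j * (\sum_i a i * n2 (bar a v - v i)) + a j * n2 (bar a v - v j))).
  by rewrite big_split /= -big_distrl /= Ha mul1r; ring.
by move=> j _; rewrite I1 // mulrDr n2_sym.
Qed.

Variables (d y : 'I_k -> V) (z : V).
Hypothesis Hne : forall i j, n2 (y i - y j) <= n2 (d i - d j).

Definition simplex a := (forall i, 0 <= a i) /\ \sum_i a i = 1.
Definition fk i w := n2 (w - y i) - n2 (z - d i).
Definition G a := \sum_i a i * fk i (bar a y).

Lemma GI a x : \sum_i a i = 1 -> \sum_i a i * fk i x = G a + n2 (x - bar a y).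
Proof.
move=> Ha; rewrite /G /fk.
rewrite (eq_bigr (fun i => a i * n2 (x - y i) - a i * n2 (z - d i))); last first.
  by move=> i _; rewrite mulrBr.
rewrite [X in _ = X + _](eq_bigr (fun i => a i * n2 (bar a y - y i) - a i * n2 (z - d i))); last first.
  by move=> i _; rewrite mulrBr.
rewrite !sumrB I1 //; ring.
Qed.

Lemma G_le0 a : simplex a -> G a <= 0.
Proof.
case=> a0 Ha.
have h1 : \sum_j a j * (\sum_i a i * n2 (y j - y i)) <=
          \sum_j a j * (\sum_i a i * n2 (d j - d i)).
  apply: ler_sum => j _; apply: ler_wpM2l => //; apply: ler_sum => i _.
  by apply: ler_wpM2l => //; exact: Hne.
rewrite !DS // in h1.
have h2 := I1 d z Ha.
have h3 := n2_ge0 (z - bar a d).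
have : G a = \sum_i a i * n2 (bar a y - y i) - \sum_i a i * n2 (z - d i).
  rewrite /G /fk -sumrB; apply: eq_bigr => i _; by rewrite mulrBr.
lra.
Qed.

Lemma G_pert a j kk t : simplex a -> 0 <= t -> t <= a kk ->
  simplex (fun i => a i + t * ((i == j)%:R - (i == kk)%:R)) /\
  G (fun i => a i + t * ((i == j)%:R - (i == kk)%:R)) =
    G a + t * (fk j (bar a y) - fk kk (bar a y)) - t ^+ 2 * n2 (y j - y kk).
Proof.
case=> a0 Ha t0 tk.
set a' := (fun i => a i + t * ((i == j)%:R - (i == kk)%:R)).
have Ha' : \sum_i a' i = 1.
  by rewrite /a' big_split /= -mulr_sumr sumrB !sum_delta1 subrr mulr0 addr0.
split.
  split => // i; rewrite /a'; case: (eqVneq i kk) => [->|ne].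
    by case: (kk == j); rewrite /= ?mulr1n ?mulr0n; lra.
  by have := a0 i; case: (i == j); rewrite /= ?mulr1n ?mulr0n; lra.
have hb : bar a' y = bar a y + t *: (y j - y kk).
  rewrite /bar /a'; rewrite (eq_bigr (fun i => a i *: y i + t *: (((i == j)%:R : R) *: y i - ((i == kk)%:R : R) *: y i))); last first.
    by move=> i _; rewrite scalerDl -scalerA scalerBl.
  by rewrite big_split /= -scaler_sumr sumrB !sum_deltaZ.
have := GI (bar a y) Ha'.
rewrite hb.
have -> : bar a y - (bar a y + t *: (y j - y kk)) = - (t *: (y j - y kk)) by rewrite opprD addNKr.
rewrite n2N !ipE.
have -> : \sum_i a' i * fk i (bar a y) = \sum_i a i * fk i (bar a y) +
   t * (\sum_i (i == j)%:R * fk i (bar a y) - \sum_i (i == kk)%:R * fk i (bar a y)).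
  rewrite /a' -sumrB mulr_sumr -big_split /=; apply: eq_bigr => i _; ring.
rewrite !sum_delta -/(G a).
rewrite (ip_sym Hip (y kk) (y j)) => h.
lra.
Qed.


Lemma kirsz_approx1 e : 0 < e -> e <= 1 -> exists w, forall j, fk j w <= e.
Proof.
move=> e0 e1.
have [k0|kpos] := posnP k.
  by exists 0 => -[m hm]; exfalso; rewrite k0 in hm.
pose i0 : 'I_k := Ordinal kpos.
pose S := [set G a | a in simplex].
have hS : has_sup S.
  split.
    exists (G (fun i => (i == i0)%:R)), (fun i => (i == i0)%:R) => //.
    by split; [move=> i; rewrite ler0n | exact: sum_delta1].
  by exists 0 => x [a ha <-]; exact: G_le0.
pose C := \sum_(j < k) \sum_(kk < k) n2 (y j - y kk).
have C0 : 0 <= C by rewrite sumr_ge0 // => j _; rewrite sumr_ge0 // => kk _; exact: n2_ge0.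
have hC : forall j kk, n2 (y j - y kk) <= C.
  move=> j kk; apply: (le_trans _ (sum_ge_term j _)).
    by apply: sum_ge_term kk _ => kk'; exact: n2_ge0.
  by move=> j'; rewrite sumr_ge0 // => kk' _; exact: n2_ge0.
pose K : R := k%:R.
have K1 : 1 <= K by rewrite /K ler1n.
pose th := e / (2 * K * (C + 1)).
have hKC : 0 < 2 * K * (C + 1) by rewrite !mulr_gt0 //; lra.
have th0 : 0 < th by rewrite divr_gt0.
have th1 : th <= 1.
  rewrite /th ler_pdivrMr // mul1r; apply: (le_trans e1).
  have : 1 <= K * (C + 1) by rewrite -[1]mulr1 ler_pM //; lra.
  lra.
have thC : K * th * C <= e / 2.
  have -> : K * th * C = e / 2 * (C / (C + 1)).
    rewrite /th; field; apply/andP; split; rewrite gt_eqF //; lra.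
  rewrite -[leRHS]mulr1 ler_wpM2l ?divr_ge0 //; first lra.
  by rewrite ler_pdivrMr ?mul1r; lra.
pose eta := th * e / (2 * K).
have eta0 : 0 < eta by rewrite /eta; apply: divr_gt0; [exact: mulr_gt0 | lra].
have Keta : K * eta = th * (e / 2).
  rewrite /eta; field; rewrite gt_eqF //; lra.
have [x [a ha <-] hGa] := sup_adherent eta0 hS.
have [a0 Ha] := ha.
have a1 : forall kk, a kk <= 1 by move=> kk; rewrite -Ha; exact: (sum_ge_term kk a0).
exists (bar a y) => j.
set w := bar a y.
have hk : forall kk, th * a kk * (fk j w - fk kk w) <= eta + th ^+ 2 * C.
  move=> kk.
  have t0 : 0 <= th * a kk by rewrite mulr_ge0 // ltW.
  have tk : th * a kk <= a kk by rewrite ler_piMl.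
  have [hs' hG'] := G_pert j ha t0 tk.
  have hsup : G (fun i => a i + th * a kk * ((i == j)%:R - (i == kk)%:R)) <= sup S.
    by apply: sup_upper_bound => //; exists (fun i => a i + th * a kk * ((i == j)%:R - (i == kk)%:R)).
  rewrite hG' in hsup.
  have hc : (th * a kk) ^+ 2 * n2 (y j - y kk) <= th ^+ 2 * C.
    rewrite exprMn -mulrA ler_wpM2l ?sqr_ge0 //.
    have ha2 : 0 <= a kk ^+ 2 by rewrite exprn_ge0.
    have ha21 : a kk ^+ 2 <= 1 by rewrite expr_le1.
    by apply: (le_trans (ler_wpM2l ha2 (hC j kk))); rewrite ler_piMl.
  lra.
have hsum : th * (fk j w - G a) <= K * (eta + th ^+ 2 * C).
  have -> : th * (fk j w - G a) = \sum_kk th * a kk * (fk j w - fk kk w).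
    rewrite /G -/w [RHS](eq_bigr (fun kk => th * fk j w * a kk - th * (a kk * fk kk w))); last first.
      by move=> kk _; ring.
    by rewrite sumrB -mulr_sumr Ha mulr1 -mulr_sumr mulrBr.
  apply: (le_trans (ler_sum _ (fun kk _ => hk kk))).
  by rewrite sumr_const card_ord -mulr_natl.
have hG0 := G_le0 ha.
have h3 : th * fk j w <= th * e.
  have eK : K * (eta + th ^+ 2 * C) = K * eta + th * (K * th * C) by ring.
  rewrite eK Keta in hsum.
  have h4 : th * (K * th * C) <= th * (e / 2) by rewrite ler_wpM2l // ltW.
  have h5 : th * G a <= 0 by rewrite mulr_ge0_le0 // ltW.
  lra.
by rewrite -(ler_pM2l th0).
Qed.

Lemma kirsz_approx e : 0 < e -> exists w, forall j, n2 (w - y j) <= n2 (z - d j) + e.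
Proof.
move=> e0.
have m0 : 0 < Num.min e 1 by rewrite lt_min e0 ltr01.
have m1 : Num.min e 1 <= 1 by rewrite ge_min lexx orbT.
have m2 : Num.min e 1 <= e by rewrite ge_min lexx.
have [w hw] := kirsz_approx1 m0 m1.
by exists w => j; have := hw j; rewrite /fk; lra.
Qed.

End Finite.


Lemma mid_id u v : n2 ((1/2 : R) *: (u + v)) = (n2 u + n2 v) / 2 - n2 (u - v) / 4.
Proof. rewrite !ipE (ip_sym Hip v u); by field.
Qed.


Section Infinite.
Variables (D : set V) (N : V -> V) (z : V).
Hypothesis HN : forall x y, D x -> D y -> n2 (N x - N y) <= n2 (x - y).

Definition Kset (F : seq V) (n : nat) : set V :=
  [set p | forall d, d \in F -> n2 (p - N d) <= n2 (z - d) + eps n].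
Definition inD (F : seq V) := forall d, d \in F -> D d.

Lemma K_ne F n : inD F -> exists p, Kset F n p.
Proof.
move=> hF.
pose dd := fun i : 'I_(size F) => nth 0 F i.
have hne : forall i j, n2 (N (dd i) - N (dd j)) <= n2 (dd i - dd j).
  by move=> i j; apply: HN; apply: hF; rewrite mem_nth.
have [w hw] := kirsz_approx z hne (eps_gt0 n).
exists w => d dF.
have hi : (index d F < size F)%N by rewrite index_mem.
by have := hw (Ordinal hi); rewrite /dd /= nth_index.
Qed.

Definition M F n := inf [set n2 p | p in Kset F n].

Lemma M_lb F n p : Kset F n p -> M F n <= n2 p.
Proof.
move=> hp; apply: ge_inf; last by exists p.
by exists 0 => x [q _ <-]; exact: n2_ge0.
Qed.

Lemma M_glb F n x : inD F -> (forall p, Kset F n p -> x <= n2 p) -> x <= M F n.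
Proof.
move=> hF h; apply: lb_le_inf.
  by have [p hp] := K_ne n hF; exists (n2 p), p.
by move=> y [p hp <-]; exact: h.
Qed.

Lemma M_adh F n e : inD F -> 0 < e -> exists p, Kset F n p /\ n2 p < M F n + e.
Proof.
move=> hF e0.
have hinf : has_inf [set n2 p | p in Kset F n].
  split; first by have [p hp] := K_ne n hF; exists (n2 p), p.
  by exists 0 => x [q _ <-]; exact: n2_ge0.
by have [x [p hp <-] h] := inf_adherent e0 hinf; exists p.
Qed.

Lemma K_mono F G n m : {subset F <= G} -> (n <= m)%N -> Kset G m `<=` Kset F n.
Proof.
move=> sFG nm p hp d dF; apply: (le_trans (hp d (sFG d dF))).
by rewrite lerD2l eps_le.
Qed.

Lemma M_mono F G n m : inD G -> {subset F <= G} -> (n <= m)%N -> M F n <= M G m.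
Proof.
move=> hG sFG nm; apply: M_glb => // p hp; apply: M_lb.
exact: K_mono hp.
Qed.

Lemma K_conv F n p q : Kset F n p -> Kset F n q -> Kset F n ((1/2 : R) *: (p + q)).
Proof.
move=> hp hq d dF.
have -> : (1/2 : R) *: (p + q) - N d = (1/2 : R) *: ((p - N d) + (q - N d)).
  have e2 : (1/2 : R) *: (N d + N d) = N d.
    by rewrite -mulr2n -scaler_nat scalerA mul1r mulVf ?scale1r // pnatr_eq0.
  by rewrite addrACA -opprD scalerBr e2.
rewrite mid_id.
have -> : p - N d - (q - N d) = p - q by rewrite opprB addrA subrK.
have := hp d dF; have := hq d dF; have := n2_ge0 (p - q); lra.
Qed.


Lemma KV : D !=set0 -> exists w, forall d, D d -> n2 (w - N d) <= n2 (z - d).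
Proof.
move=> [d0 Dd0].
pose S := [set x | exists F n, inD F /\ M F n = x].
pose B := 2 * (n2 (z - d0) + 1) + 2 * n2 (N d0).
have hS : has_sup S.
  split; first by exists (M [::] 0), [::], 0%N.
  exists B => x [F [n [hF <-]]].
  have hF' : inD (d0 :: F) by move=> d; rewrite inE => /orP[/eqP ->|]; [exact: Dd0|exact: hF].
  have [q hq] := K_ne n hF'.
  have hq' : Kset F n q by apply: K_mono hq => // d dF; rewrite inE dF orbT.
  apply: (le_trans (M_lb hq')).
  have h1 := hq d0 (mem_head _ _).
  have h2 := n2_tri2 q (N d0) 0.
  rewrite !subr0 in h2.
  have := eps_le1 n (R := R); rewrite /B; lra.
pose s := sup S.
have hc : forall n, exists c : seq V * nat, inD c.1 /\ s - eps n < M c.1 c.2.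
  move=> n; have [x [F [m [hF <-]]] h] := sup_adherent (eps_gt0 n) hS.
  by exists (F, m).
have [c hc'] := choice hc.
pose Fs := fix Fs n := if n is n'.+1 then Fs n' ++ (c n'.+1).1 else (c 0%N).1.
pose Ns := fix Ns n := if n is n'.+1 then maxn (maxn (Ns n') (c n'.+1).2) n'.+1 else (c 0%N).2.
have FsD : forall n, inD (Fs n).
  elim=> [|n IH] /=; first exact: (hc' 0%N).1.
  by move=> d; rewrite mem_cat => /orP[/IH|/(hc' n.+1).1].
have Fs_mono : forall n m, (n <= m)%N -> {subset Fs n <= Fs m}.
  move=> n; elim=> [|m IH]; first by rewrite leqn0 => /eqP ->.
  rewrite leq_eqVlt => /orP[/eqP ->//|]; rewrite ltnS => /IH h d /h dF /=.
  by rewrite mem_cat dF.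
have Ns_mono : forall n m, (n <= m)%N -> (Ns n <= Ns m)%N.
  move=> n; elim=> [|m IH]; first by rewrite leqn0 => /eqP ->.
  rewrite leq_eqVlt => /orP[/eqP ->//|]; rewrite ltnS => /IH h /=.
  by rewrite (leq_trans h) // (leq_trans (leq_maxl _ (c m.+1).2)) // leq_maxl.
have cF : forall n, {subset (c n).1 <= Fs n}.
  by case=> [|n] //= d dF; rewrite mem_cat dF orbT.
have cN : forall n, ((c n).2 <= Ns n)%N.
  by case=> [|n] //=; rewrite (leq_trans (leq_maxr (Ns n) _)) // leq_maxl.
have nN : forall n, (n <= Ns n)%N.
  by case=> [|n] //=; rewrite leq_maxr.
have Mlo : forall n, s - eps n < M (Fs n) (Ns n).
  move=> n; apply: (lt_le_trans (hc' n).2); exact: M_mono.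
have Mhi : forall F n, inD F -> M F n <= s.
  by move=> F n hF; apply: sup_upper_bound => //; exists F, n.
have hp : forall n, exists p, Kset (Fs n) (Ns n) p /\ n2 p < M (Fs n) (Ns n) + eps n.
  by move=> n; apply: M_adh => //; exact: eps_gt0.
have [p hp'] := choice hp.
have midb : forall n q1 q2, Kset (Fs n) (Ns n) q1 -> Kset (Fs n) (Ns n) q2 ->
    n2 q1 <= s + eps n -> n2 q2 <= s + eps n -> n2 (q1 - q2) <= 8 * eps n.
  move=> n q1 q2 h1 h2 n1 n2'.
  have hm := M_lb (K_conv h1 h2).
  rewrite mid_id in hm.
  have := Mlo n; lra.
have cau : forall n k, (n <= k)%N -> n2 (p n - p k) <= 8 * eps n.
  move=> n k nk; apply: midb.
  - exact: (hp' n).1.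
  - exact: (K_mono (Fs_mono _ _ nk) (Ns_mono _ _ nk) (hp' k).1).
  - have := (hp' n).2; have := Mhi _ (Ns n) (FsD n); lra.
  - have := (hp' k).2; have := Mhi _ (Ns k) (FsD k); have := eps_le (R:=R) nk; lra.
have [l hl] := complete_rate (ler0n R 8) cau.
exists l => d Dd.
apply: (@R3 _ _ _ (n2 (z - d))) => t t0.
apply: (@R2 _ _ _ ((1 + t^-1) * 32 + (1 + t))) => n.
pose G := Fs n ++ [:: d].
have GD : inD G by move=> x; rewrite mem_cat => /orP[/FsD|]; rewrite ?inE => // /eqP ->.
have [q [hq1 hq2]] := M_adh (Ns n) GD (eps_gt0 n).
have hqK : Kset (Fs n) (Ns n) q by apply: K_mono hq1 => // x xF; rewrite mem_cat xF.
have hpq : n2 (p n - q) <= 8 * eps n.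
  apply: midb => //; first exact: (hp' n).1.
  - have := (hp' n).2; have := Mhi _ (Ns n) (FsD n); lra.
  - have := Mhi _ (Ns n) GD; lra.
have hqd : n2 (q - N d) <= n2 (z - d) + eps n.
  apply: (le_trans (hq1 d _)); first by rewrite mem_cat mem_head orbT.
  by rewrite lerD2l eps_le.
have hlq : n2 (l - q) <= 32 * eps n.
  have := n2_tri2 l (p n) q; rewrite (n2_sym l (p n)); have := hl n; lra.
have ti : 0 < t^-1 by rewrite invr_gt0.
have := n2_tri l q (N d) ti; rewrite invrK => h.
have e1 : 0 <= 1 + t^-1 by lra.
have e2 : 0 <= 1 + t by lra.
have h1 := ler_wpM2l e1 hlq.
have h2 := ler_wpM2l e2 hqd.
lra.
Qed.

End Infinite.


Lemma sh4 (x1 y1 x2 y2 : V) : (x1 - y1) - (x2 - y2) = (x1 - x2) - (y1 - y2).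
Proof. by rewrite !opprB addrACA [RHS]addrACA [- y1 + _]addrC. Qed.

Section Main.
Variables (D : set V) (T : V -> V) (alpha : R).
Hypothesis a0 : 0 < alpha.

Let rho := (2 * alpha)^-1 - 1.
Let A := sub_id (setinv D T).
Definition Mp (s t : V) := alpha^-1 *: (t - (1 - alpha) *: s).
Definition Nm x := Mp x (T x).

Lemma key_id a b : ip b (a - b) - rho * n2 (a - b) =
   alpha / 2 * (n2 a - n2 (alpha^-1 *: (b - (1 - alpha) *: a))).
Proof.
rewrite /rho !ipE (ip_sym Hip b a); field; rewrite gt_eqF //.
Qed.

Lemma comon_pair s1 s2 t1 t2 :
  (rho * ipnorm ip ((s1 - t1) - (s2 - t2)) ^+ 2 <= ip (t1 - t2) ((s1 - t1) - (s2 - t2)))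
  <-> n2 (Mp s1 t1 - Mp s2 t2) <= n2 (s1 - s2).
Proof.
rewrite ipnormE sh4.
have -> : Mp s1 t1 - Mp s2 t2 = alpha^-1 *: ((t1 - t2) - (1 - alpha) *: (s1 - s2)).
  by rewrite /Mp -scalerBr sh4 -scalerBr.
have := key_id (s1 - s2) (t1 - t2).
have h2 : 0 < alpha / 2 by rewrite divr_gt0.
split => h.
  have : 0 <= alpha / 2 * (n2 (s1 - s2) - n2 (alpha^-1 *: (t1 - t2 - (1 - alpha) *: (s1 - s2))))
    by lra.
  by rewrite pmulr_rge0 // subr_ge0.
have : 0 <= alpha / 2 * (n2 (s1 - s2) - n2 (alpha^-1 *: (t1 - t2 - (1 - alpha) *: (s1 - s2)))).
  by rewrite pmulr_rge0 // subr_ge0.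
lra.
Qed.

Lemma inA x u : A x u <-> exists s, [/\ D s, T s = x & s - x = u].
Proof.
split; first by case=> s [Ds Ts] <-; exists s.
by case=> s [Ds Ts su]; exists s.
Qed.

Lemma comon_iff : comonotone ip rho A <->
  (forall x y, D x -> D y -> n2 (Nm x - Nm y) <= n2 (x - y)).
Proof.
split.
  move=> h x y Dx Dy; apply/comon_pair; apply: h; apply/inA.
    by exists x.
  by exists y.
move=> h x u y v /inA[s1 [D1 <- <-]] /inA[s2 [D2 <- <-]].
by apply/comon_pair; exact: h.
Qed.

Lemma conic_iff : conically_nonexpansive ip D alpha T <->
  (forall x y, D x -> D y -> n2 (Nm x - Nm y) <= n2 (x - y)).
Proof.
split.
  case=> _ [N [hN hT]] x y Dx Dy.
  have e : forall x, D x -> Nm x = N x.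
    move=> w Dw; rewrite /Nm /Mp hT // addrC addKr scalerA mulVf ?gt_eqF // scale1r //.
  by rewrite !e // -ipnorm_le; exact: hN.
move=> h; split => //; exists Nm; split.
  by move=> x y Dx Dy; rewrite ipnorm_le; exact: h.
move=> x _; rewrite /Nm /Mp scalerA mulfV ?gt_eqF // scale1r.
by rewrite addrC subrK.
Qed.

Lemma part_i : conically_nonexpansive ip D alpha T <-> comonotone ip rho A.
Proof. by rewrite conic_iff comon_iff. Qed.


Lemma part_ii : D !=set0 ->
  (conically_nonexpansive ip D alpha T /\ D = setT) <-> max_comonotone ip rho A.
Proof.
move=> Dne; split.
  case=> hc hD; split; first by apply/part_i.
  move=> B hB hAB x u Bxu; apply/inA.
  pose y := x + u.
  have Dy : D y by rewrite hD.
  have hA' : A (T y) (y - T y) by apply/inA; exists y.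
  have := hB x u (T y) (y - T y) Bxu (hAB _ _ hA').
  rewrite ipnormE.
  have e : x - T y = - (u - (y - T y)) by rewrite opprB /y addrAC addrK.
  rewrite e ipNl.
  set w := u - (y - T y) => hw.
  have r1 : 0 < rho + 1 by rewrite /rho subrK invr_gt0 mulr_gt0.
  have : (rho + 1) * n2 w <= 0 by rewrite mulrDl mul1r; lra.
  rewrite pmulr_rle0 // => hw0.
  have w0 : w = 0 by apply: n2_eq0; apply/le_anti; rewrite hw0 n2_ge0.
  have eu : u = y - T y by apply/eqP; rewrite -subr_eq0 -/w w0.
  exists y; split => //.
    have : y - u = T y by rewrite {1}eu opprB addrC subrK.
    by rewrite /y addrK.
  by rewrite /y (addrC x u) addrK.
case=> hcom hmax.
have hN := (comon_iff.1 hcom).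
split; first by apply/conic_iff.
apply/seteqP; split => // z _.
have [w hw] := KV z hN Dne.
pose t0 := (1 - alpha) *: z + alpha *: w.
have Mz : Mp z t0 = w.
  by rewrite /Mp /t0 addrC addKr scalerA mulVf ?gt_eqF // scale1r.
pose u0 := z - t0.
pose P s t := (D s /\ T s = t) \/ (s = z /\ t = t0).
pose B := fun x => A x `|` [set u | x = t0 /\ u = u0].
have hBP : forall x u, B x u -> exists s, P s x /\ u = s - x.
  move=> x u [/inA[s [Ds Ts su]]|[-> ->]].
    by exists s; split => //; left.
  by exists z; split => //; right.
have hP : forall s1 s2 t1 t2, P s1 t1 -> P s2 t2 -> n2 (Mp s1 t1 - Mp s2 t2) <= n2 (s1 - s2).
  move=> s1 s2 t1 t2 [[D1 <-]|[-> ->]] [[D2 <-]|[-> ->]].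
  - exact: hN.
  - by rewrite Mz n2_sym (n2_sym s1); exact: hw.
  - by rewrite Mz; exact: hw.
  - by rewrite !subrr ip0l.
have hB : comonotone ip rho B.
  move=> x u y v /hBP[s1 [P1 ->]] /hBP[s2 [P2 ->]].
  by apply/comon_pair; exact: hP.
have hAB : forall x, A x `<=` B x by move=> x u h; left.
have := hmax B hB hAB t0 u0 (or_intror (conj erefl erefl)).
case/inA => s [Ds _ su].
have -> : z = s by move: su => /(congr1 (fun v => v + t0)); rewrite !subrK.
exact: Ds.
Qed.

End Main.

End Basics.

Lemma ne_conic1 (R : realType) (V : lmodType R) (ip : V -> V -> R) (D : set V) (T : V -> V) :
  nonexpansive ip D T <-> conically_nonexpansive ip D 1 T.
Proof.
split.
  move=> h; split => //; exists T; split => // x _.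
  by rewrite subrr scale0r add0r scale1r.
case=> _ [N [hN hT]] x y Dx Dy.
by rewrite !hT // subrr !scale0r !add0r !scale1r; exact: hN.
Qed.

Unset Implicit Arguments.

Theorem proposition3p9 (R : realType) (V : lmodType R) (ip : V -> V -> R)
  (Hip : is_hilbert ip) (D : set V) (T : V -> V) (alpha : R) :
  D !=set0 -> 0 < alpha ->
  let A := sub_id (setinv D T) in
  let rho := (2 * alpha)^-1 - 1 in
  (conically_nonexpansive ip D alpha T <-> comonotone ip rho A) /\
  ((conically_nonexpansive ip D alpha T /\ D = setT) <-> max_comonotone ip rho A) /\
  (nonexpansive ip D T <-> comonotone ip (- 2^-1) A) /\
  ((nonexpansive ip D T /\ D = setT) <-> max_comonotone ip (- 2^-1) A) /\
  (alpha < 1 ->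
    (averaged ip D alpha T <-> comonotone ip rho A) /\
    ((averaged ip D alpha T /\ D = setT) <-> max_comonotone ip rho A)).
Proof.
move=> Dne a0 A rho.
have h1 : (2 * 1)^-1 - 1 = - 2^-1 :> R by field.
have pi := part_i Hip D T a0.
have pii := part_ii Hip T a0 Dne.
have pi1 := part_i Hip D T (@ltr01 R).
have pii1 := part_ii Hip T (@ltr01 R) Dne.
rewrite h1 in pi1 pii1.
split => //; split => //; split.
  by rewrite ne_conic1.
split.
  by rewrite ne_conic1.
move=> a1.
have av : averaged ip D alpha T <-> conically_nonexpansive ip D alpha T.
  by split; [case | move=> h; split => //; apply/andP; split].
by rewrite av.
Qed.
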